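(* Let $p\geqslant 2$ be a prime number and let $P(x)\in\mathbb{Q}[x]$ be a polynomial of degree $d$, written as $P(x)=\sum_{i=0}^{d}\frac{b_i}{c_i}x^i$ with $b_i,c_i\in\mathbb{Z}$, $c_i\neq 0$, $\gcd(b_i,c_i)=1$. Let $\gamma\in\mathbb{Z}$, and for $i\in\{0,\dots,d\}$ write $P(\gamma+i)=\frac{r_i}{q_i}$ with $r_i,q_i\in\mathbb{Z}$, $q_i\neq 0$, $\gcd(r_i,q_i)=1$. Suppose $r_0\equiv r_1\equiv\dots\equiv r_d\equiv 0\pmod p$ and $d<p$. Then $b_0\equiv b_1\equiv\dots\equiv b_d\equiv 0\pmod p$. *)

(* Defs.v *)
From mathcomp Require Import all_boot all_order all_algebra.
Set Implicit Arguments. Unset Strict Implicit. Unset Printing Implicit Defensive.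

(* Main.v *)
Require Import Defs.
From mathcomp Require Import all_boot all_order all_algebra.
From mathcomp Require Import zify ring.
Import Order.TTheory GRing.Theory Num.Theory.
Local Open Scope ring_scope.

Section Loc.
Variable p : nat.
Hypothesis pr : prime p.

Definition loc (x : rat) := exists a b : int, ~~ (p%:Z %| b)%Z /\ x = a%:~R / b%:~R.
Definition idl (x : rat) := exists a b : int,
  (p%:Z %| a)%Z /\ ~~ (p%:Z %| b)%Z /\ x = a%:~R / b%:~R.

Lemma ndvdM (m n : int) : ~~ (p%:Z %| m)%Z -> ~~ (p%:Z %| n)%Z -> ~~ (p%:Z %| m * n)%Z.
Proof. by rewrite !dvdzE abszM Euclid_dvdM // => /negPf-> /negPf->. Qed.

Lemma ndvd1 : ~~ (p%:Z %| 1)%Z.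
Proof. by rewrite dvdzE /= dvdn1; case: eqP pr => // ->. Qed.

Lemma ndvd_neq0 (b : int) : ~~ (p%:Z %| b)%Z -> b%:~R != 0 :> rat.
Proof. by apply: contra; rewrite intr_eq0 => /eqP->; apply: dvdz0. Qed.

Lemma loc_int (m : int) : loc m%:~R.
Proof. by exists m, 1; rewrite ndvd1 divr1. Qed.

Lemma locD x y : loc x -> loc y -> loc (x + y).
Proof.
move=> [a1 [b1 [h1 ->]]] [a2 [b2 [h2 ->]]].
exists (a1 * b2 + a2 * b1), (b1 * b2); split; first exact: ndvdM.
have := ndvd_neq0 _ h1; have := ndvd_neq0 _ h2 => n2 n1.
rewrite rmorphD !rmorphM /=; field; by apply/andP.
Qed.

Lemma locM x y : loc x -> loc y -> loc (x * y).
Proof.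
move=> [a1 [b1 [h1 ->]]] [a2 [b2 [h2 ->]]].
exists (a1 * a2), (b1 * b2); split; first exact: ndvdM.
by rewrite !rmorphM /= mulf_div.
Qed.

Lemma locN x : loc x -> loc (- x).
Proof.
move=> [a1 [b1 [h1 ->]]]; exists (- a1), b1; split => //.
by rewrite rmorphN mulNr.
Qed.

Lemma loc_inv (m : int) : ~~ (p%:Z %| m)%Z -> loc (m%:~R)^-1.
Proof. by move=> h; exists 1, m; rewrite h div1r. Qed.

Lemma idl0 : idl 0.
Proof. by exists 0, 1; rewrite dvdz0 ndvd1 mul0r. Qed.

Lemma idlD x y : idl x -> idl y -> idl (x + y).
Proof.
move=> [a1 [b1 [d1 [h1 ->]]]] [a2 [b2 [d2 [h2 ->]]]].
exists (a1 * b2 + a2 * b1), (b1 * b2); split; last split; first 1 last.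
- exact: ndvdM.
- have := ndvd_neq0 _ h1; have := ndvd_neq0 _ h2 => n2 n1.
  rewrite rmorphD !rmorphM /=; field; by apply/andP.
by by apply: rpredD; apply: dvdz_mulr.
Qed.

Lemma idlM x y : idl x -> loc y -> idl (x * y).
Proof.
move=> [a1 [b1 [d1 [h1 ->]]]] [a2 [b2 [h2 ->]]].
exists (a1 * a2), (b1 * b2); split; last split; first exact: dvdz_mulr.
- exact: ndvdM.
by rewrite !rmorphM /= mulf_div.
Qed.

Lemma idl_sum n (F : 'I_n -> rat) : (forall i, idl (F i)) -> idl (\sum_i F i).
Proof. by move=> h; apply: big_ind => //; [exact: idl0 | exact: idlD]. Qed.

Lemma loc_sum n (F : 'I_n -> rat) : (forall i, loc (F i)) -> loc (\sum_i F i).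
Proof. by move=> h; apply: big_ind => //; [exact: (loc_int 0) | exact: locD]. Qed.

Definition ploc (P : {poly rat}) := forall k, loc P`_k.

Lemma ploc1 : ploc 1.
Proof. by move=> k; rewrite coef1; case: (k == 0)%N; [exact: (loc_int 1)|exact: (loc_int 0)]. Qed.

Lemma plocM P Q : ploc P -> ploc Q -> ploc (P * Q).
Proof.
move=> hP hQ k; rewrite coefM; apply: loc_sum => i; exact: locM.
Qed.

Lemma ploc_XsubC (m : int) : ploc ('X - (m%:~R)%:P).
Proof.
move=> k; rewrite coefB coefX coefC; apply: locD.
  by case: (k == 1)%N; [exact: (loc_int 1)|exact: (loc_int 0)].
by apply: locN; case: (k == 0)%N; [exact: loc_int|exact: (loc_int 0)].
Qed.

End Loc.

Theorem lemma3p3 (p : nat) (P : {poly rat}) (d : nat)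
    (b c : nat -> int) (gamma : int) (r q : nat -> int) :
  prime p ->
  size P = d.+1 ->
  (forall i, (i <= d)%N ->
     c i != 0 /\ coprimez (b i) (c i) /\ P`_i = (b i)%:~R / (c i)%:~R) ->
  (forall i, (i <= d)%N ->
     q i != 0 /\ coprimez (r i) (q i) /\
     P.[gamma%:~R + i%:R] = (r i)%:~R / (q i)%:~R) ->
  (forall i, (i <= d)%N -> (p%:Z %| r i)%Z) ->
  (d < p)%N ->
  forall i, (i <= d)%N -> (p%:Z %| b i)%Z.
Proof.
move=> pr hsz hb hr hdr hdp i hi.
pose x := fun j : nat => (gamma%:~R + j%:R : rat).
have xE j : x j = (gamma + j%:Z)%:~R by rewrite /x rmorphD.
have xinj : injective x.
  move=> j1 j2; rewrite /x => /addrI /eqP; rewrite eqr_nat => /eqP //.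
have n0 : (0 < d.+1)%N by [].
have HP := lagrange_gen n0 xinj (eq_leq hsz).
have hid : idl p P`_i.
  rewrite HP coef_sum; apply: (@idl_sum p pr d.+1) => j; rewrite coefCM lagrangeE //=.
  rewrite coefCM; apply: (@idlM p pr).
  - have jd : (j <= d)%N by rewrite -ltnS.
    have [_ [cop ->]] := hr j jd.
    exists (r j), (q j); split; first exact: hdr.
    split => //; apply/negP => hq.
    move: cop; rewrite /coprimez => /eqP h.
    have : (p%:Z %| gcdz (r j) (q j))%Z by rewrite dvdz_gcd hq hdr.
    by rewrite h; apply/negP; apply: (@ndvd1 p pr).
  apply: (@locM p pr).
  - set m := (\prod_(k < d.+1 | k != j) (j%:Z - k%:Z)).
    have -> : (\prod_(k < d.+1 | k != j) ('X - (x k)%:P)).[x j] = m%:~R.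
      rewrite horner_prod rmorph_prod /=; apply: eq_bigr => k _.
      by rewrite hornerXsubC !xE -rmorphB /= opprD addrACA subrr add0r.
    apply: loc_inv; rewrite /m; apply: (big_ind (fun m : int => ~~ (p%:Z %| m)%Z)).
    + exact: (@ndvd1 p pr).
    + exact: (@ndvdM p pr).
    move=> k hk; rewrite dvdzE /=; apply/negP => hdv.
    have hk' : (nat_of_ord k != nat_of_ord j) by [].
    have := ltn_ord k; have := ltn_ord j => hj hk2.
    have h0 : (0 < `|j%:Z - k%:Z|)%N.
      by rewrite absz_gt0 subr_eq0 eqz_nat eq_sym.
    have := dvdn_leq h0 hdv.
    have : (`|j%:Z - k%:Z| <= d)%N by lia.
    lia.
  apply: (big_ind (ploc p)).
  - exact: (@ploc1 p pr).
  - exact: (@plocM p pr).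
  by move=> k _; rewrite xE; apply: (@ploc_XsubC p pr).
have [c0 [_ hPi]] := hb i hi.
move: hid; rewrite hPi => [[a [e [ha [he]]]]] heq.
have ne := @ndvd_neq0 p e he.
have c0' : (c i)%:~R != 0 :> rat by rewrite intr_eq0.
have : (b i * e = a * c i)%R.
  apply: (@intr_inj rat); rewrite !rmorphM /=.
  move: heq => /eqP; rewrite eqr_div // => /eqP //.
move=> h.
have : (p%:Z %| b i * e)%Z by rewrite h; apply: dvdz_mulr.
rewrite !dvdzE abszM Euclid_dvdM //=; case/orP => // h2.
by move: he; rewrite dvdzE h2.
Qed.
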